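(* Let $\lambda_1,\dots,\lambda_8$ be the Gell-Mann matrices (traceless Hermitian $3\times3$ matrices forming a basis of $i\,\mathfrak{su}_3$ with $\operatorname{Tr}(\lambda_a\lambda_b)=2\delta_{ab}$), and for $v\in\mathbb R^8$ write $v\lambda=\sum_av_a\lambda_a$. Then $\frac13(\mathbf 1+v\lambda)$ is a density matrix if and only if $$|v|^2\le\min\big(3,\ 1+\det(v\lambda)\big).$$
   Context: A density matrix is a positive semidefinite Hermitian matrix of trace 1. *)

(* Defs.v *)
From HB Require Import structures.
From mathcomp Require Import all_boot all_order all_algebra.
From mathcomp Require Import reals.
From mathcomp Require Import complex.
Set Implicit Arguments. Unset Strict Implicit. Unset Printing Implicit Defensive.
Import Order.TTheory GRing.Theory Num.Theory.
Local Open Scope ring_scope.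

Section GellMann.
Variable R : realType.
Local Notation C := (complex R).

Definition rC (x : R) : C := Complex x 0.
Definition iC : C := Complex 0 1.

Definition adjmx (m n : nat) (A : 'M[C]_(m, n)) : 'M[C]_(n, m) :=
  \matrix_(i, j) conjc (A j i).

Definition hermitian (n : nat) (A : 'M[C]_n) : Prop := adjmx A = A.

Definition psd (n : nat) (A : 'M[C]_n) : Prop :=
  hermitian A /\ forall x : 'cV[C]_n, 0 <= (adjmx x *m A *m x) 0 0.

Definition density_matrix (n : nat) (A : 'M[C]_n) : Prop :=
  psd A /\ \tr A = 1.

Definition mx3 (a b c d e f g h k : C) : 'M[C]_3 :=
  \matrix_(i < 3, j < 3)
    match nat_of_ord i, nat_of_ord j with
    | 0, 0 => a | 0, 1 => b | 0, _ => c
    | 1, 0 => d | 1, 1 => e | 1, _ => f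
    | _, 0 => g | _, 1 => h | _, _ => k
    end.

(* The standard Gell-Mann matrices lambda_1, ..., lambda_8 (indexed 0..7). *)
Definition gell_mann (a : 'I_8) : 'M[C]_3 :=
  match nat_of_ord a with
  | 0 => mx3 0 1 0  1 0 0  0 0 0
  | 1 => mx3 0 (- iC) 0  iC 0 0  0 0 0
  | 2 => mx3 1 0 0  0 (-1) 0  0 0 0
  | 3 => mx3 0 0 1  0 0 0  1 0 0
  | 4 => mx3 0 0 (- iC)  0 0 0  iC 0 0
  | 5 => mx3 0 0 0  0 0 1  0 1 0
  | 6 => mx3 0 0 0  0 0 (- iC)  0 iC 0
  | _ => rC (Num.sqrt 3)^-1 *: mx3 1 0 0  0 1 0  0 0 (-2)
  end.

Definition vlambda (v : 'rV[R]_8) : 'M[C]_3 :=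
  \sum_(a < 8) rC (v 0 a) *: gell_mann a.

Definition sqnorm (v : 'rV[R]_8) : R := \sum_(a < 8) v 0 a ^+ 2.

End GellMann.

(* Main.v *)
Require Import Defs.
From HB Require Import structures.
From mathcomp Require Import all_boot all_order all_algebra.
From mathcomp Require Import reals.
From mathcomp Require Import complex.
From mathcomp Require Import sesquilinear spectral ring lra.
Import Order.TTheory GRing.Theory Num.Theory.
Local Open Scope ring_scope.
Set Implicit Arguments. Unset Strict Implicit. Unset Printing Implicit Defensive.
Section S.
Variable R : realType.
Local Notation C := (complex R).

Lemma adjmxE m n (A : 'M[C]_(m,n)) : adjmx A = map_mx Num.conj (A^T).
Proof. by apply/matrixP=> i j; rewrite !mxE. Qed.

Lemma adjmx_mul m n p (A : 'M[C]_(m,n)) (B : 'M[C]_(n,p)) :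
  adjmx (A *m B) = adjmx B *m adjmx A.
Proof. by rewrite !adjmxE trmx_mul map_mxM. Qed.


Definition ReC (z : C) : R := complex.Re z.
Definition ImC (z : C) : R := complex.Im z.
Lemma ReD (x y : C) : ReC (x + y) = ReC x + ReC y. Proof. by case: x; case: y. Qed.
Lemma ImD (x y : C) : ImC (x + y) = ImC x + ImC y. Proof. by case: x; case: y. Qed.
Lemma ReN (x : C) : ReC (- x) = - ReC x. Proof. by case: x. Qed.
Lemma ImN (x : C) : ImC (- x) = - ImC x. Proof. by case: x. Qed.
Lemma ReM (x y : C) : ReC (x * y) = ReC x * ReC y - ImC x * ImC y. Proof. by case: x; case: y. Qed.
Lemma ImM (x y : C) : ImC (x * y) = ReC x * ImC y + ImC x * ReC y. Proof. by case: x; case: y. Qed.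
Lemma Re0 : ReC 0 = 0. Proof. by []. Qed.
Lemma Im0 : ImC 0 = 0. Proof. by []. Qed.
Lemma Re1 : ReC 1 = 1. Proof. by []. Qed.
Lemma Im1 : ImC 1 = 0. Proof. by []. Qed.
Lemma ReCpx a b : ReC (Complex a b) = a. Proof. by []. Qed.
Lemma ImCpx a b : ImC (Complex a b) = b. Proof. by []. Qed.
Lemma ReConj (x : C) : ReC (Num.conj x) = ReC x. Proof. by case: x. Qed.
Lemma ImConj (x : C) : ImC (Num.conj x) = - ImC x. Proof. by case: x. Qed.
Lemma C_eq (x y : C) : ReC x = ReC y -> ImC x = ImC y -> x = y.
Proof. by case: x; case: y => a b c d /= -> ->. Qed.
Lemma ReB (x y : C) : ReC (x - y) = ReC x - ReC y. Proof. by rewrite ReD ReN. Qed.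
Lemma ImB (x y : C) : ImC (x - y) = ImC x - ImC y. Proof. by rewrite ImD ImN. Qed.

Definition ReIm := (ReD, ImD, ReN, ImN, ReM, ImM, Re0, Im0, Re1, Im1, ReCpx, ImCpx, ReConj, ImConj).
Lemma spec (n : nat) (A : 'M[C]_n) : adjmx A = A ->
  exists (P : 'M[C]_n) (d : 'rV[C]_n),
    [/\ P *m adjmx P = 1%:M, adjmx P *m P = 1%:M,
        A = adjmx P *m diag_mx d *m P & forall i, d 0 i = rC (ReC (d 0 i))].
Proof.
move=> hA.
have hh : A \is hermsymmx.
  by apply/is_hermitianmxP; rewrite (_ : (-1) ^+ false = 1) ?scale1r // {1}(esym hA) adjmxE.
have hn := hermitian_normalmx hh.
have U := spectral_unitarymx A.
have hr := hermitian_spectral_diag_real hh.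
exists (spectralmx A), (spectral_diag A).
have e1 : spectralmx A *m adjmx (spectralmx A) = 1%:M.
  by rewrite adjmxE; apply/unitarymxP.
have e2 : invmx (spectralmx A) = adjmx (spectralmx A).
  by rewrite adjmxE -invmx_unitary.
split => //.
- by rewrite -e2 mulVmx // spectral_unit.
- by rewrite -e2; apply/orthomx_spectralP.
- move=> i. have := mxOverP hr 0 i.
  case: (spectral_diag A 0 i) => a b.
  rewrite realE /= => /orP[/andP[/eqP H _]|/andP[/eqP H _]]; rewrite /rC ?H // -H.
Qed.
Lemma vlambdaE (v : 'rV[R]_8) :
  let a k := v 0 (inord k) in let s := (Num.sqrt 3)^-1 : R in
  vlambda v = mx3 (Complex (a 2%N + s * a 7%N) 0) (Complex (a 0%N) (- a 1%N)) (Complex (a 3%N) (- a 4%N))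
                  (Complex (a 0%N) (a 1%N)) (Complex (s * a 7%N - a 2%N) 0) (Complex (a 5%N) (- a 6%N))
                  (Complex (a 3%N) (a 4%N)) (Complex (a 5%N) (a 6%N)) (Complex (-2 * (s * a 7%N)) 0).
Proof.
move=> a s.
have -> : vlambda v = \sum_(i < 8) rC (v 0 (@inord 7 i)) *: @gell_mann R (@inord 7 i).
  by apply: eq_bigr => i _; rewrite inord_val.
rewrite -(big_mkord xpredT (fun i => rC (v 0 (@inord 7 i)) *: @gell_mann R (@inord 7 i))).
rewrite unlock /= /gell_mann !inordK //=.
apply/matrixP => i j; rewrite /mx3 !mxE.
case: i => [[|[|[|//]]] ?]; case: j => [[|[|[|//]]] ?] /=;
  apply: C_eq; rewrite /rC /iC /a /s; rewrite ?ReIm; ring.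
Qed.
Lemma herm_vl (v : 'rV[R]_8) : adjmx (vlambda v) = vlambda v.
Proof.
rewrite vlambdaE /=; apply/matrixP => i j; rewrite /mx3 !mxE.
by case: i => [[|[|[|//]]] ?]; case: j => [[|[|[|//]]] ?] /=;
  apply: C_eq; rewrite ?ReIm; ring.
Qed.

Lemma tr_vl (v : 'rV[R]_8) : \tr (vlambda v) = 0.
Proof.
rewrite vlambdaE /= /mxtrace !big_ord_recr big_ord0 /= /mx3 !mxE /=.
by apply: C_eq; rewrite ?ReIm; ring.
Qed.

Lemma sqnormE (v : 'rV[R]_8) : let a k := v 0 (inord k) in
  sqnorm v = a 0%N ^+ 2 + a 1%N ^+ 2 + a 2%N ^+ 2 + a 3%N ^+ 2 + a 4%N ^+ 2 + a 5%N ^+ 2 + a 6%N ^+ 2 + a 7%N ^+ 2.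
Proof.
move=> a.
have -> : sqnorm v = \sum_(i < 8) v 0 (@inord 7 i) ^+ 2.
  by apply: eq_bigr => i _; rewrite inord_val.
rewrite -(big_mkord xpredT (fun i => v 0 (@inord 7 i) ^+ 2)).
rewrite unlock /= /a; ring.
Qed.

Lemma s3 (x : R) : x ^+ 2 = 3 * ((Num.sqrt 3)^-1 * x) ^+ 2.
Proof.
rewrite exprMn exprVn sqr_sqrtr ?ler0n // mulrA mulfV ?mul1r //.
by rewrite pnatr_eq0.
Qed.

Lemma trsq_vl (v : 'rV[R]_8) : \tr (vlambda v *m vlambda v) = rC (2 * sqnorm v).
Proof.
rewrite sqnormE vlambdaE /= /mxtrace !big_ord_recr big_ord0 /=.
rewrite !mxE !big_ord_recr !big_ord0 /= /mx3 !mxE /=.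
rewrite (s3 (v 0 (inord 7))).
move: ((Num.sqrt 3)^-1 * v 0 (inord 7)) => b.
by apply: C_eq; rewrite /rC ?ReIm; ring.
Qed.

Lemma alg (d0 d1 d2 s : R) : d0+d1+d2 = 0 -> d0^+2+d1^+2+d2^+2 = 2*s ->
  (0 <= 1+d0 /\ 0<=1+d1 /\ 0<=1+d2) <-> (s <= 3 /\ s <= 1 + d0*d1*d2).
Proof.
move=> h1 h2.
have hs : s = (d0^+2+d1^+2+d2^+2) / 2 by rewrite h2; field.
have hd : d2 = - d0 - d1 by lra.
have e3 : (1+d0)*(1+d1)*(1+d2) = 1 - s + d0*d1*d2 by rewrite hs hd; field.
have e2 : (1+d0)*(1+d1) + (1+d1)*(1+d2) + (1+d0)*(1+d2) = 3 - s by rewrite hs hd; field.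
split.
- move=> [a [b c]].
  split.
  + have : 0 <= (1+d0)*(1+d1) + (1+d1)*(1+d2) + (1+d0)*(1+d2).
      by rewrite !addr_ge0 ?mulr_ge0.
    lra.
  + have : 0 <= (1+d0)*(1+d1)*(1+d2) by rewrite !mulr_ge0.
    lra.
- move=> [h3 h4].
  have e3' : 0 <= (1+d0)*(1+d1)*(1+d2) by lra.
  have e2' : 0 <= (1+d0)*(1+d1) + (1+d1)*(1+d2) + (1+d0)*(1+d2) by lra.
  have hsum : (1+d0)+(1+d1)+(1+d2) = 3 by lra.
  move: hsum e3' e2'; clear e3 e2 hs hd h1 h2 h3 h4.
  move: (1+d0) (1+d1) (1+d2) => x y z hs e3 e2.
  split; last split.
  + rewrite leNgt; apply/negP => hx.
    have : y * z <= 0 by nra.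
    nra.
  + rewrite leNgt; apply/negP => hx.
    have : x * z <= 0 by nra.
    nra.
  + rewrite leNgt; apply/negP => hx.
    have : x * y <= 0 by nra.
    nra.
Qed.

Lemma sum3 (T : comPzRingType) (F : 'I_3 -> T) :
  \sum_i F i = F (inord 0) + F (inord 1) + F (inord 2).
Proof.
rewrite !big_ord_recr big_ord0 /= add0r.
by congr (_ + _ + _); congr F; apply/val_inj; rewrite /= inordK.
Qed.

Lemma prod3 (T : comPzRingType) (F : 'I_3 -> T) :
  \prod_i F i = F (inord 0) * F (inord 1) * F (inord 2).
Proof.
rewrite !big_ord_recr big_ord0 /= mul1r.
by congr (_ * _ * _); congr F; apply/val_inj; rewrite /= inordK.
Qed.

Lemma qform n (P : 'M[C]_n) (e : 'rV[C]_n) (x : 'cV[C]_n) :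
  (adjmx x *m (adjmx P *m diag_mx e *m P) *m x) 0 0 =
  \sum_i e 0 i * (Num.conj ((P *m x) i 0) * (P *m x) i 0).
Proof.
rewrite !mulmxA -adjmx_mul -mulmxA mul_mx_diag !mxE.
by apply: eq_bigr => i _; rewrite !mxE mulrA [_ * e 0 i]mulrC.
Qed.

Lemma rC_ge0 (x : R) : (0 <= rC x) = (0 <= x).
Proof. exact: ler0c. Qed.

Lemma rC_le (x y : R) : (rC x <= rC y) = (x <= y).
Proof. exact: lecR. Qed.

Lemma rCD (x y : R) : rC (x + y) = rC x + rC y. Proof. by apply: C_eq; rewrite /rC ?ReIm; ring. Qed.
Lemma rCM (x y : R) : rC (x * y) = rC x * rC y. Proof. by apply: C_eq; rewrite /rC ?ReIm; ring. Qed.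
Lemma rC1 : rC (1 : R) = 1. Proof. by []. Qed.
Lemma rC0 : rC (0 : R) = 0. Proof. by []. Qed.
Lemma rC_inj (x y : R) : rC x = rC y -> x = y. Proof. by case. Qed.
Lemma conj_rC (x : R) : Num.conj (rC x) = rC x. Proof. by apply: C_eq; rewrite /rC ?ReIm ?oppr0. Qed.

End S.

Theorem mainTheorem17 (R : realType) (v : 'rV[R]_8) :
  density_matrix (rC (3%:R^-1 : R) *: (1%:M + vlambda v))
  <-> (sqnorm v <= 3 /\ rC (sqnorm v) <= 1 + \det (vlambda v)).
Proof.
have hA := herm_vl v.
have [P [d [hP1 hP2 hAe hd]]] := spec hA.
set A := vlambda v in hA hAe *.
set c := (3%:R^-1 : R).
pose r i := ReC (d 0 i).
have hdr : forall i, d 0 i = rC (r i) by [].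
have htr : r (inord 0) + r (inord 1) + r (inord 2) = 0.
  apply: rC_inj; rewrite !rCD -!hdr -sum3 -mxtrace_diag rC0 -(tr_vl v) -/A hAe.
  by rewrite mxtrace_mulC mulmxA hP1 mul1mx.
have hAA : A *m A = adjmx P *m (diag_mx d *m diag_mx d) *m P.
  rewrite {1 2}hAe -!mulmxA (mulmxA P (adjmx P)) hP1 mul1mx.
  by rewrite !mulmxA.
have htr2 : r (inord 0) ^+ 2 + r (inord 1) ^+ 2 + r (inord 2) ^+ 2 = 2 * sqnorm v.
  apply: rC_inj; rewrite -trsq_vl -/A hAA (mxtrace_mulC (adjmx P *m _) P) (mulmxA P (adjmx P)) hP1 mul1mx.
  rewrite mulmx_diag mxtrace_diag sum3 !mxE !hdr.
  by rewrite !rCD !rCM.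
have hdet : \det A = rC (r (inord 0) * r (inord 1) * r (inord 2)).
  have h1 : \det (adjmx P) * \det P = 1 by rewrite -det_mulmx hP2 det1.
  rewrite hAe !det_mulmx det_diag prod3 !rCM -!hdr.
  by rewrite mulrAC h1 mul1r.
pose e := \row_i (rC c * (1 + d 0 i)).
have hM : rC c *: (1%:M + A) = adjmx P *m diag_mx e *m P.
  have -> : diag_mx e = rC c *: (1%:M + diag_mx d).
    apply/matrixP => i j; rewrite !mxE.
    by case: (i == j); rewrite ?mulr1n ?mulr0n ?addr0 ?mulr0.
  by rewrite -scalemxAr -scalemxAl mulmxDr mulmxDl mulmx1 hP2 -hAe.
have hc : 0 < c by rewrite invr_gt0 ltr0n.
have key : (forall i, 0 <= 1 + r i) <-> density_matrix (rC c *: (1%:M + A)).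
  split.
  - move=> hr; split; last first.
      rewrite mxtraceZ mxtraceD mxtrace1 tr_vl addr0.
      have -> : (3%:R : complex R) = rC 3 by rewrite (_ : rC 3 = real_complex R 3) // rmorph_nat.
      by rewrite -rCM mulVf // pnatr_eq0.
    split.
      apply/matrixP => i j; have := congr1 (fun M : 'M[complex R]_3 => M i j) hA.
      rewrite !mxE => <-.
      rewrite rmorphM rmorphD rmorph_nat eq_sym; congr (_ * _); by rewrite /rC /= oppr0.
    move=> x; rewrite hM qform; apply: sumr_ge0 => i _.
    apply: mulr_ge0; last by rewrite mulrC mul_conjC_ge0.
    by rewrite mxE hdr -rC1 -rCD -rCM rC_ge0 mulr_ge0 // ltW.
  - move=> [[_ hpsd] _] k.
    have := hpsd (adjmx P *m delta_mx k 0).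
    rewrite hM qform mulmxA hP1 mul1mx (bigD1 k) //= big1 => [|i ik]; last first.
      by rewrite !mxE (negbTE ik) /= rmorph0 mul0r mulr0.
    rewrite !mxE !eqxx /= rmorph1 !mulr1 addr0 hdr -rC1 -rCD -rCM rC_ge0.
    by rewrite pmulr_rge0.
rewrite -key hdet.
have -> : 1 + rC (r (inord 0) * r (inord 1) * r (inord 2)) = rC (1 + r (inord 0) * r (inord 1) * r (inord 2)) by rewrite rCD.
rewrite rC_le -(alg htr htr2).
split.
- by move=> h; split; [|split]; apply: h.
- move=> [h0 [h1 h2]] i.
  have : i = inord 0 \/ i = inord 1 \/ i = inord 2.
    by case: i => [[|[|[|//]]] ?]; [left|right;left|right;right]; apply/val_inj; rewrite /= inordK.
  by case=> [->|[->|->]].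
Qed.
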